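(* Let $Q$ be a locally point symmetric convex polytope in $\mathbb{R}^D$, and let $\mathbf{k} \in Q-Q$. The following statements are equivalent: (i) $Q\cap (Q-\mathbf{k})$ consists of a single point, i.e., $\mathbf{k}$ is a uniquely formed difference in $Q-Q$; (ii) $\mathbf{k}$ is a vertex of the polytope $Q-Q$; (iii) $\mathbf{k} = \mathbf{u}-\mathbf{v}$ for some strictly antipodal vertices $\mathbf{u}$ and $\mathbf{v}$ of $Q$.
   Context: $Q-Q=\{\mathbf{x}-\mathbf{y}:\mathbf{x},\mathbf{y}\in Q\}$ and $Q-\mathbf{k}=\{\mathbf{x}-\mathbf{k}:\mathbf{x}\in Q\}$. A vector $\mathbf{k}\in Q-Q$ is uniquely formed if there is a unique pair $\mathbf{s}_1,\mathbf{s}_2\in Q$ with $\mathbf{s}_1-\mathbf{s}_2=\mathbf{k}$. Two vertices $\mathbf{u},\mathbf{v}$ of a convex polytope $Q$ are strictly antipodal if there exist parallel supporting hyperplanes $H_1,H_2$ of $Q$ with $H_1\cap Q=\{\mathbf{u}\}$ and $H_2 \cap Q = \{\mathbf{v}\}$. The supporting cone of $Q$ at a vertex $\mathbf{v}$ is $C(\mathbf{v}) = \mathbf{v} + \bigcup_{\lambda \ge 0}\lambda(Q - \mathbf{v})$. A convex polytope $Q$ with $m$ vertices is locally point symmetric if its vertices can be partitioned into $m/2$ pairs of strictly antipodal vertices such that for each pair $\{\mathbf{u},\mathbf{v}\}$, $C(\mathbf{u}) - \mathbf{u} = \mathbf{v} - C(\mathbf{v})$. *)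

(* Defs.v *)
From HB Require Import structures.
From mathcomp Require Import all_boot all_order all_algebra.
From mathcomp Require Import reals.
Set Implicit Arguments. Unset Strict Implicit. Unset Printing Implicit Defensive.
Import Order.TTheory GRing.Theory Num.Theory.
Local Open Scope ring_scope.

Section Defs.
Variables (R : realType) (D : nat).
Notation point := 'rV[R]_D.

Definition dot (c x : point) : R := \sum_(i < D) c 0 i * x 0 i.

Definition conv (S : seq point) (x : point) : Prop :=
  exists w : 'I_(size S) -> R,
    (forall i, 0 <= w i) /\ \sum_(i < size S) w i = 1 /\
    x = \sum_(i < size S) w i *: S`_i.

Definition is_polytope (Q : point -> Prop) : Prop :=
  exists S : seq point, forall x, Q x <-> conv S x.

Definition is_vertex (Q : point -> Prop) (v : point) : Prop :=
  Q v /\ forall x y (t : R), Q x -> Q y -> 0 < t -> t < 1 ->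
    v = (1 - t) *: x + t *: y -> x = y.

Definition diff_set (Q : point -> Prop) (k : point) : Prop :=
  exists x y, Q x /\ Q y /\ k = x - y.

Definition translate_neg (Q : point -> Prop) (k : point) (z : point) : Prop :=
  exists x, Q x /\ z = x - k.

Definition uniquely_formed (Q : point -> Prop) (k : point) : Prop :=
  exists s1 s2, (Q s1 /\ Q s2 /\ s1 - s2 = k) /\
    forall t1 t2, Q t1 -> Q t2 -> t1 - t2 = k -> t1 = s1 /\ t2 = s2.

Definition supporting (Q : point -> Prop) (c : point) (a : R) : Prop :=
  c != 0 /\
  ((forall x, Q x -> dot c x <= a) \/ (forall x, Q x -> a <= dot c x)) /\
  exists x, Q x /\ dot c x = a.

Definition strictly_antipodal (Q : point -> Prop) (u v : point) : Prop :=
  is_vertex Q u /\ is_vertex Q v /\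
  exists (c : point) (a b : R),
    a != b /\ supporting Q c a /\ supporting Q c b /\
    (forall x, (Q x /\ dot c x = a) <-> x = u) /\
    (forall x, (Q x /\ dot c x = b) <-> x = v).

Definition supp_cone (Q : point -> Prop) (v : point) (z : point) : Prop :=
  exists (lam : R) (q : point), 0 <= lam /\ Q q /\ z = v + lam *: (q - v).

(* locally point symmetric: the vertices are partitioned into pairs {u, v}
   (encoded as a fixed-point-free involution sigma on the vertex set) of
   strictly antipodal vertices with C(u) - u = v - C(v). *)
Definition locally_point_symmetric (Q : point -> Prop) : Prop :=
  is_polytope Q /\
  exists sigma : point -> point,
    forall u, is_vertex Q u ->
      [/\ is_vertex Q (sigma u), sigma u != u, sigma (sigma u) = u,
          strictly_antipodal Q u (sigma u) &
          forall z, (exists y, supp_cone Q u y /\ z = y - u) <->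
                    (exists y, supp_cone Q (sigma u) y /\ z = sigma u - y)].

End Defs.

(* Main.v *)
Require Import Defs.
From HB Require Import structures.
From mathcomp Require Import all_boot all_order all_algebra.
From mathcomp Require Import reals.
From mathcomp Require Import ring lra.
From Stdlib Require Import Classical.
Import Order.TTheory GRing.Theory Num.Theory.
Local Open Scope ring_scope.

Section Helpers.
Set Implicit Arguments.
Variables (R : realType) (D : nat).
Notation point := 'rV[R]_D.
Variable Q : point -> Prop.

Definition cvx n (f : 'I_n -> point) (x : point) : Prop :=
  exists w : 'I_n -> R, (forall i, 0 <= w i) /\ \sum_(i < n) w i = 1 /\
    x = \sum_(i < n) w i *: f i.
Arguments cvx {n}.

Lemma cvx_comb n (f : 'I_n -> point) p q t :
  cvx f p -> cvx f q -> 0 <= t -> t <= 1 -> cvx f ((1-t) *: p + t *: q).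
Proof.
move=> [a [a0 [a1 ->]]] [b [b0 [b1 ->]]] t0 t1.
exists (fun i => (1-t) * a i + t * b i); split; [|split].
- move=> i; apply: addr_ge0; apply: mulr_ge0 => //; by rewrite ?subr_ge0.
- by rewrite big_split /= -!mulr_sumr a1 b1 !mulr1 subrK.
- rewrite !scaler_sumr -big_split /=.
  apply eq_bigr; move=> i _.
  by rewrite [RHS]scalerDl !scalerA.

Qed.

Lemma cvx_delta n (f : 'I_n -> point) j : cvx f (f j).
Proof.
exists (fun i => (i == j)%:R); split; [|split].
- by move=> i; rewrite ler0n.
- by rewrite (bigD1 j) //= eqxx big1 ?addr0 // => i /negbTE ->.
- by rewrite (bigD1 j) //= eqxx scale1r big1 ?addr0 // => i /negbTE ->; rewrite scale0r.
Qed.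

Lemma support_all n (f : 'I_n -> point) :
  (forall z, Q z <-> cvx f z) -> (forall i, is_vertex Q (f i)) ->
  forall x, Q x -> exists u e, is_vertex Q u /\ 0 < e /\
    forall q, Q q -> Q (x + e *: (q - u)).
Proof.
move=> HQ Hv x /HQ [w [w0 [w1 ->]]].
have [i wi]: exists i, 0 < w i.
  apply: NNPP => H.
  have: \sum_(i < n) w i = 0.
    apply: big1 => i _; apply/eqP; rewrite eq_le w0 andbT leNgt; apply/negP => h.
    by apply: H; exists i.
  by rewrite w1 => /eqP; rewrite oner_eq0.
exists (f i), (w i); split => //; split => // q /HQ [v [v0 [v1 ->]]].
apply/HQ; exists (fun j => w j + w i * v j - (j == i)%:R * w i); split; [|split].
- move=> j; case: (j =P i) => [->|_].
    have ->: w i + w i * v i - 1%:R * w i = w i * v i by ring.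
    by apply: mulr_ge0 => //; exact: ltW.
  by rewrite mul0r subr0; apply: addr_ge0 => //; apply: mulr_ge0 => //; exact: ltW.
- rewrite sumrB big_split /= -mulr_sumr w1 v1 mulr1.
  rewrite (bigD1 i) //= eqxx mul1r big1 ?addr0 ?addrK // => j /negbTE ->.
  by rewrite mul0r.
- under [RHS]eq_bigr => j _ do rewrite scalerBl scalerDl -scalerA.
  rewrite sumrB big_split /= -scaler_sumr.
  have -> : \sum_(j < n) ((j == i)%:R * w i) *: f j = w i *: f i.
    by rewrite (bigD1 i) //= eqxx mul1r big1 ?addr0 // => j /negbTE ->; rewrite mul0r scale0r.
  by rewrite scalerBr addrA.
Qed.


Lemma redundant m (f : 'I_m.+1 -> point) j :
  (forall z, Q z <-> cvx f z) -> ~ is_vertex Q (f j) ->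
  cvx (fun i => f (lift j i)) (f j).
Proof.
move=> HQ Hnv; apply: NNPP => H; apply: Hnv; split.
  by apply/HQ; exact: cvx_delta.
move=> a b t /HQ [al [al0 [al1 Ea]]] /HQ [be [be0 [be1 Eb]]] t0 t1 Ej.
pose ga i := (1-t) * al i + t * be i.
have ga0 i : 0 <= ga i.
  by apply: addr_ge0; apply: mulr_ge0 => //; rewrite ?subr_ge0 ltW.
have ga1 : \sum_(i < m.+1) ga i = 1.
  by rewrite big_split /= -!mulr_sumr al1 be1 !mulr1 subrK.
have Eg : f j = \sum_(i < m.+1) ga i *: f i.
  rewrite Ej Ea Eb !scaler_sumr -big_split /=; apply eq_bigr => i _.
  by rewrite [RHS]scalerDl !scalerA.
have alj : al j <= 1 by rewrite -al1 (bigD1 j) //= lerDl sumr_ge0.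
have bej : be j <= 1 by rewrite -be1 (bigD1 j) //= lerDl sumr_ge0.
case: (ltrP (ga j) 1) => gj.
  exfalso; apply: H.
  have gn : 1 - ga j != 0 by rewrite subr_eq0 eq_sym (lt_eqF gj).
  have E1 : \sum_(i < m) ga (lift j i) = 1 - ga j.
    by move: ga1; rewrite (bigD1_ord j) //= => <-; rewrite addrC addrK.
  have E2 : \sum_(i < m) ga (lift j i) *: f (lift j i) = (1 - ga j) *: f j.
    by rewrite scalerBl scale1r {1}Eg (bigD1_ord j) //= addrAC subrr add0r.
  exists (fun i => ga (lift j i) / (1 - ga j)); split; [|split].
  - move=> i; apply: divr_ge0 => //; rewrite subr_ge0; exact: ltW.
  - by rewrite -mulr_suml E1 divff.
  - under eq_bigr => i _ do rewrite mulrC -scalerA.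
    by rewrite -scaler_sumr E2 scalerA mulVf // scale1r.
have h1 : (1-t) * (1 - al j) + t * (1 - be j) <= 0 by rewrite /ga in gj; lra.
have p1 : 0 <= (1-t) * (1 - al j) by apply: mulr_ge0; rewrite subr_ge0 // ltW.
have p2 : 0 <= t * (1 - be j) by apply: mulr_ge0; rewrite ?subr_ge0 // ltW.
have q1 : (1-t) * (1 - al j) = 0 by lra.
have q2 : t * (1 - be j) = 0 by lra.
have aj1 : al j = 1.
  move/eqP: q1; rewrite mulf_eq0 subr_eq0 => /orP[/eqP h|/eqP h] //; lra.
have bj1 : be j = 1.
  move/eqP: q2; rewrite mulf_eq0 subr_eq0 => /orP[/eqP h|/eqP h] //; lra.
have key (c : 'I_m.+1 -> R) : (forall i, 0 <= c i) -> \sum_(i < m.+1) c i = 1 ->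
    c j = 1 -> \sum_(i < m.+1) c i *: f i = f j.
  move=> c0 c1 cj; rewrite (bigD1_ord j) //= cj scale1r big1 ?addr0 // => i _.
  have cs : \sum_(i < m) c (lift j i) = 0.
    move: c1; rewrite (bigD1_ord j) //= cj; lra.
  by rewrite (psumr_eq0P (P := predT) (F := fun i => c (lift j i)) _ cs) ?scale0r.
by rewrite Ea Eb !key.
Qed.

Lemma remove_equiv m (f : 'I_m.+1 -> point) j :
  (forall z, Q z <-> cvx f z) -> cvx (fun i => f (lift j i)) (f j) ->
  forall z, Q z <-> cvx (fun i => f (lift j i)) z.
Proof.
move=> HQ [d [d0 [d1 Ed]]] z; split.
  move=> /HQ [w [w0 [w1 ->]]].
  exists (fun i => w (lift j i) + w j * d i); split; [|split].
  - by move=> i; apply: addr_ge0 => //; apply: mulr_ge0.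
  - by rewrite big_split /= -mulr_sumr d1 mulr1 addrC -(bigD1_ord j (P := predT)).
  - rewrite (bigD1_ord j) //= {1}Ed scaler_sumr addrC -big_split /=.
    by apply eq_bigr => i _; rewrite scalerDl scalerA.
move=> [w [w0 [w1 ->]]]; apply/HQ.
exists (fun k => oapp w 0 (unlift j k)); split; [|split].
- by move=> k; case: (unlift j k) => //=.
- by rewrite (bigD1_ord j) //= unlift_none add0r; under eq_bigr => i _ do rewrite liftK.
- rewrite (bigD1_ord j) //= unlift_none scale0r add0r.
  by under [RHS]eq_bigr => i _ do rewrite liftK.
Qed.

Lemma support n : forall (f : 'I_n -> point),
  (forall z, Q z <-> cvx f z) ->
  forall x, Q x -> exists u e, is_vertex Q u /\ 0 < e /\
    forall q, Q q -> Q (x + e *: (q - u)).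
Proof.
elim: n => [|m IH] f HQ x Qx.
  case: (HQ x) => /(_ Qx) [w [_ [w1 _]]] _.
  by move: w1; rewrite big_ord0 => /eqP; rewrite eq_sym oner_eq0.
case: (classic (forall i, is_vertex Q (f i))) => [Hall|].
  exact: (support_all HQ Hall Qx).
move=> /not_all_ex_not [j Hj].
apply: (IH (fun i : 'I_m => f (lift j i))) => //.
exact: (remove_equiv j HQ (redundant j HQ Hj)).
Qed.

Lemma polytope_conv : is_polytope Q -> forall p q t, Q p -> Q q -> 0 <= t -> t <= 1 ->
  Q ((1-t) *: p + t *: q).
Proof.
move=> [S HS] p q t Qp Qq t0 t1.
have HQ : forall z, Q z <-> cvx (fun i : 'I_(size S) => S`_i) z := HS.
by apply/HQ; apply: cvx_comb => //; apply/HQ.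
Qed.

Lemma seg : is_polytope Q -> forall x d a s, Q x -> Q (x + a *: d) -> 0 < a ->
  0 <= s -> s <= a -> Q (x + s *: d).
Proof.
move=> HP x d a s Qx Qa a0 s0 sa.
have -> : x + s *: d = (1 - s/a) *: x + (s/a) *: (x + a *: d).
  by rewrite scalerDr scalerA divfK ?gt_eqF // addrA -scalerDl subrK scale1r.
apply: polytope_conv => //; first exact: divr_ge0 (ltW a0).
by rewrite ler_pdivrMr // mul1r.
Qed.

Lemma no_common_dir : is_polytope Q -> forall s1 s2 d a b,
  (forall t1 t2, Q t1 -> Q t2 -> t1 - t2 = s1 - s2 -> t1 = s1 /\ t2 = s2) ->
  Q s1 -> Q s2 -> 0 < a -> 0 < b -> Q (s1 + a *: d) -> Q (s2 + b *: d) -> d = 0.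
Proof.
move=> HP s1 s2 d a b U Q1 Q2 a0 b0 Qa Qb.
have H e : 0 < e -> Q (s1 + e *: d) -> Q (s2 + e *: d) -> d = 0.
  move=> e0 Q1e Q2e.
  have Ed : (s1 + e *: d) - (s2 + e *: d) = s1 - s2.
    by apply/rowP => i; rewrite !mxE; lra.
  have [E _] := U _ _ Q1e Q2e Ed.
  move/eqP: E; rewrite -subr_eq0 addrAC subrr add0r scaler_eq0 (gt_eqF e0) /=.
  by move/eqP.
case: (lerP a b) => hab.
  apply: (H a) => //; exact: (seg HP a Q2 Qb b0 (ltW a0) hab).
apply: (H b) => //; exact: (seg HP b Q1 Qa a0 (ltW b0) (ltW hab)).
Qed.

Lemma cone_dir (w s y : point) e :
  (forall z, (exists y0, supp_cone Q w y0 /\ z = y0 - w) <->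
             (exists y1, supp_cone Q s y1 /\ z = s - y1)) ->
  0 < e -> (forall q, Q q -> Q (y + e *: (q - w))) ->
  forall d, (exists y1, supp_cone Q s y1 /\ d = s - y1) ->
  d = 0 \/ exists b, 0 < b /\ Q (y + b *: d).
Proof.
move=> Hc e0 Hs d /Hc [y0 [[lam [q [l0 [Qq ->]]]] ->]].
case: (eqVneq lam 0) => [->|ln].
  by left; rewrite scale0r addr0 subrr.
right; exists (e / lam); split.
  by apply: divr_gt0 => //; rewrite lt_def ln l0.
by rewrite addrAC subrr add0r scalerA divfK //; apply: Hs.
Qed.

Lemma dotB (c x y : point) : dot c (x - y) = dot c x - dot c y.
Proof. by rewrite /dot -sumrB; apply: eq_bigr => i _; rewrite !mxE mulrBr. Qed.

Lemma dotC (c : point) t (p q : point) :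
  dot c ((1-t) *: p + t *: q) = (1-t) * dot c p + t * dot c q.
Proof.
rewrite /dot !mulr_sumr -big_split; apply: eq_bigr => i _; rewrite !mxE /=; ring.
Qed.

Lemma antip_aux (phi : point -> R) a b u v :
 (forall x y, phi (x - y) = phi x - phi y) ->
 (forall t p q, phi ((1-t)*:p + t*:q) = (1-t)*phi p + t*phi q) ->
 (forall x, Q x -> phi x <= a) -> (forall x, Q x -> b <= phi x) ->
 (forall x, Q x -> phi x = a -> x = u) -> (forall x, Q x -> phi x = b -> x = v) ->
 Q u -> Q v -> phi u = a -> phi v = b -> is_vertex (diff_set Q) (u - v).
Proof.
move=> pB pC Ha Hb Fu Fv Qu Qv pu pv; split; first by exists u, v.
move=> p q t [x1 [y1 [Qx1 [Qy1 ->]]]] [x2 [y2 [Qx2 [Qy2 ->]]]] t0 t1 E.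
have := congr1 phi E; rewrite pC !pB pu pv => E'.
have h1 := Ha _ Qx1; have h2 := Hb _ Qy1; have h3 := Ha _ Qx2; have h4 := Hb _ Qy2.
have P1 : 0 <= (1-t) * (a - b - (phi x1 - phi y1)).
  by apply: mulr_ge0; lra.
have P2 : 0 <= t * (a - b - (phi x2 - phi y2)).
  by apply: mulr_ge0; lra.
have Z1 : (1-t) * (a - b - (phi x1 - phi y1)) = 0 by lra.
have Z2 : t * (a - b - (phi x2 - phi y2)) = 0 by lra.
move/eqP: Z1; rewrite mulf_eq0 => /orP[/eqP|/eqP] Z1; first by exfalso; lra.
move/eqP: Z2; rewrite mulf_eq0 => /orP[/eqP|/eqP] Z2; first by exfalso; lra.
have ex1 : x1 = u by apply: Fu => //; lra.
have ey1 : y1 = v by apply: Fv => //; lra.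
have ex2 : x2 = u by apply: Fu => //; lra.
have ey2 : y2 = v by apply: Fv => //; lra.
by rewrite ex1 ey1 ex2 ey2.
Qed.

Lemma antipodal_vertex u v : strictly_antipodal Q u v -> is_vertex (diff_set Q) (u - v).
Proof.
move=> [Vu [Vv [c [a [b [ab [[_ [sa _]] [[_ [sb _]] [Fu Fv]]]]]]]]].
have [Qu pu] := proj2 (Fu u) erefl.
have [Qv pv] := proj2 (Fv v) erefl.
have Fu' x : Q x -> dot c x = a -> x = u by move=> h1 h2; apply/Fu.
have Fv' x : Q x -> dot c x = b -> x = v by move=> h1 h2; apply/Fv.
case: sa => sa; case: sb => sb.
- exfalso; have h1 := sa _ Qv; have h2 := sb _ Qu; rewrite pu pv in h1 h2.
  by move/eqP: ab; apply; apply/eqP; rewrite eq_le h1 h2.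
- apply: (@antip_aux (dot c) a b) => //.
  + exact: dotB.
  + exact: dotC.
- apply: (@antip_aux (fun x => - dot c x) (-a) (-b)) => //.
  + by move=> x y; rewrite dotB; ring.
  + by move=> t p q; rewrite dotC; ring.
  + by move=> x Qx; rewrite lerN2; apply: sa.
  + by move=> x Qx; rewrite lerN2; apply: sb.
  + by move=> x Qx /oppr_inj; apply: Fu'.
  + by move=> x Qx /oppr_inj; apply: Fv'.
  + by rewrite pu.
  + by rewrite pv.
- exfalso; have h1 := sa _ Qv; have h2 := sb _ Qu; rewrite pu pv in h1 h2.
  by move/eqP: ab; apply; apply/eqP; rewrite eq_le h1 h2.
Qed.

End Helpers.

Arguments cvx {R D n}.

Theorem lemma13 (R : realType) (D : nat) (Q : 'rV[R]_D -> Prop) (k : 'rV[R]_D) :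
  locally_point_symmetric Q -> diff_set Q k ->
  [/\ ((exists z, forall y, (Q y /\ translate_neg Q k y) <-> y = z)
         <-> uniquely_formed Q k),
      (uniquely_formed Q k <-> is_vertex (diff_set Q) k) &
      (is_vertex (diff_set Q) k <->
         exists u v, strictly_antipodal Q u v /\ k = u - v)].
Proof.
move=> [HP [sigma Hsig]] Hk.
have part1 : (exists z, forall y, (Q y /\ translate_neg Q k y) <-> y = z)
         <-> uniquely_formed Q k.
  split.
  - move=> [z Hz].
    have [Qz [x [Qx Ez]]] := proj2 (Hz z) erefl.
    exists x, z; split.
      by split => //; split => //; rewrite Ez opprB addrC subrK.
    move=> t1 t2 Q1 Q2 E.
    have h : t2 = z.
      apply/Hz; split => //; exists t1; split => //.
      by apply/rowP => i; move: (congr1 (fun v : 'rV[R]_D => v 0 i) E); rewrite !mxE; lra.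
    split => //; apply/rowP => i.
    move: (congr1 (fun v : 'rV[R]_D => v 0 i) E) (congr1 (fun v : 'rV[R]_D => v 0 i) Ez) (congr1 (fun v : 'rV[R]_D => v 0 i) h).
    rewrite !mxE; lra.
  - move=> [s1 [s2 [[Q1 [Q2 E]] U]]]; exists s2 => y; split.
    + move=> [Qy [x [Qx Ey]]].
      have Ex : x - y = k.
        by apply/rowP => i; move: (congr1 (fun v : 'rV[R]_D => v 0 i) Ey); rewrite !mxE; lra.
      by have [_ ->] := U x y Qx Qy Ex.
    + move=> ->; split => //; exists s1; split => //.
      by apply/rowP => i; move: (congr1 (fun v : 'rV[R]_D => v 0 i) E); rewrite !mxE; lra.
have ii_i : is_vertex (diff_set Q) k -> uniquely_formed Q k.
  move=> [[s1 [s2 [Q1 [Q2 E]]]] Hext].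
  exists s1, s2; split; first by split => //; split => //; rewrite E.
  move=> t1 t2 T1 T2 Et.
  have h2 : (0 : R) < 2^-1 by rewrite invr_gt0 ltr0n.
  have h2' : (2^-1 : R) < 1 by rewrite invf_lt1 ?ltr0n // ltr1n.
  have Hc : s1 - t2 = t1 - s2.
    apply: (Hext _ _ 2^-1) => //.
    + by exists s1, t2.
    + by exists t1, s2.
    + apply/rowP => i; move: (congr1 (fun v : 'rV[R]_D => v 0 i) E) (congr1 (fun v : 'rV[R]_D => v 0 i) Et).
      rewrite !mxE; lra.
  move/rowP: Hc => H; split; apply/rowP => i; move: (H i) (congr1 (fun v : 'rV[R]_D => v 0 i) E) (congr1 (fun v : 'rV[R]_D => v 0 i) Et);
    rewrite !mxE; lra.
have iii_ii : (exists u v, strictly_antipodal Q u v /\ k = u - v) -> is_vertex (diff_set Q) k.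
  by move=> [u [v [Huv ->]]]; exact: antipodal_vertex.
have i_iii : uniquely_formed Q k -> exists u v, strictly_antipodal Q u v /\ k = u - v.
  move=> [s1 [s2 [[Q1 [Q2 E]] U]]].
  have U' : forall t1 t2, Q t1 -> Q t2 -> t1 - t2 = s1 - s2 -> t1 = s1 /\ t2 = s2.
    by move=> t1 t2 T1 T2 Et; apply: U => //; rewrite Et.
  have [HP' _] := (conj HP HP).
  case: (HP) => S HS.
  have HQ : forall z, Q z <-> cvx (fun i : 'I_(size S) => S`_i) z := HS.
  have [u [e1 [Vu [e10 Su]]]] := support Q HQ s1 Q1.
  have [w [e2 [Vw [e20 Sw]]]] := support Q HQ s2 Q2.
  have [Vsw _ ssw _ Cw] := Hsig w Vw.
  have [Vsu _ ssu Au Cu] := Hsig u Vu.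
  have Qvert x : is_vertex Q x -> Q x by case.
  have mkcone (p q : 'rV[R]_D) : Q q -> supp_cone Q p q.
    by move=> Qq; exists 1, q; split => //; split => //; rewrite scale1r addrC subrK.
  have E1 : sigma w = u.
    apply/eqP; rewrite -subr_eq0; apply/eqP.
    have := cone_dir s2 e2 Cw e20 Sw (d := sigma w - u).
    case.
    - by exists u; split => //; apply: mkcone; apply: Qvert.
    - by [].
    - move=> [b [b0 Qb]].
      apply: (no_common_dir HP (sigma w - u) e1 b U' Q1 Q2 e10 b0 _ Qb).
      by apply: Su; apply: Qvert.
  have Q1' : Q (s1 + 1 *: (u - s1)) by rewrite scale1r addrC subrK; apply: Qvert.
  have E2 : s1 = u.
    apply/eqP; rewrite eq_sym -subr_eq0; apply/eqP.
    have := cone_dir s2 e2 Cw e20 Sw (d := u - s1).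
    case.
    - by exists s1; split; [apply: mkcone|rewrite E1].
    - by [].
    - move=> [b [b0 Qb]].
      exact: (no_common_dir HP (u - s1) 1 b U' Q1 Q2 ltr01 b0 Q1' Qb).
  have E3 : sigma u = w by rewrite -E1 ssw.
  have Q2' : Q (s2 + 1 *: (w - s2)) by rewrite scale1r addrC subrK; apply: Qvert.
  have E4 : s2 = w.
    apply/eqP; rewrite eq_sym -subr_eq0; apply/eqP.
    have := cone_dir s1 e1 Cu e10 Su (d := w - s2).
    case.
    - by exists s2; split; [apply: mkcone|rewrite E3].
    - by [].
    - move=> [b [b0 Qb]].
      exact: (no_common_dir HP (w - s2) b 1 U' Q1 Q2 b0 ltr01 Qb Q2').
  exists u, (sigma u); split => //.
  by rewrite -E E2 E4 E3.
split => //; split.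
- move=> H; apply: iii_ii; exact: i_iii.
- exact: ii_i.
- move=> H; apply: i_iii; exact: ii_i.
- exact: iii_ii.
Qed.
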